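(* Let $I$ be a finite set. For each tree $T$ on $I$, the interval $[\hat{0},T]$ of the poset $\operatorname{For}(I)$ is a lattice.
   Context: A tree on a finite set $I$ is a (non-planar) rooted binary tree whose leaves are bijectively labeled by $I$: vertices are inner vertices (valence $3$) and leaves and the root (valence $1$), edges oriented towards the root; one-leaf trees are allowed. A forest on $I$ is a set of trees whose leaf sets partition $I$. For forests $F,G$ on $I$, $F \leq G$ if there is a continuous map $F\to G$ which (D1) is increasing with respect to orientation towards the root, (D2) maps inner vertices to inner vertices injectively, (D3) is the identity of $I$ on leaves, (D4) is injective on each tree of $F$. This gives the poset $\operatorname{For}(I)$, whose minimum $\hat{0}$ is the forest without inner vertices. *)

(* Defs.v *)
From mathcomp Require Import all_boot.
Set Implicit Arguments. Unset Strict Implicit. Unset Printing Implicit Defensive.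

(* Encoding: a (non-planar, rooted, binary, leaf-labelled) forest on the finite
   set I is represented by its family of clusters: for every vertex v other
   than a root, the set of leaves below v.  Leaves give the singletons [set x],
   inner vertices give the clusters of size >= 2.  Roots (valence 1) are not
   recorded: each tree has exactly one root, sitting above its maximal
   cluster. *)

Section Forests.
Variable I : finType.

Definition laminar (F : {set {set I}}) : Prop :=
  forall A B, A \in F -> B \in F ->
    [\/ A \subset B, B \subset A | [disjoint A & B]].

Definition binary_splits (F : {set {set I}}) : Prop :=
  forall C, C \in F -> 1 < #|C| ->
    exists A B, [/\ A \in F, B \in F, (A != set0) && (B != set0),
                    [disjoint A & B] & A :|: B = C].

Definition is_forest (F : {set {set I}}) : Prop :=
  [/\ set0 \notin F, (forall x : I, [set x] \in F), laminar F & binary_splits F].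

(* a tree on I: a forest consisting of a single tree, i.e. whose leaf set I
   is itself a cluster (its top vertex) *)
Definition is_tree (F : {set {set I}}) : Prop := is_forest F /\ [set: I] \in F.

Definition inner (F : {set {set I}}) (C : {set I}) : bool := (C \in F) && (1 < #|C|).

Definition child (F : {set {set I}}) (C D : {set I}) : Prop :=
  [/\ C \in F, D \in F, C \proper D &
      forall K, K \in F -> C \proper K -> ~ K \proper D].

(* F <= G : combinatorial form of a map F -> G satisfying (D1)-(D4).
   phi gives the image of each non-root vertex of F (a vertex of G); the map on
   edges is then the unique monotone path between the images.  The images of
   the roots of F can always be chosen just above the image of the top vertex,
   so they impose no condition. *)
Definition forest_le (F G : {set {set I}}) : Prop :=
  exists phi : {set I} -> {set I},
    [/\ (forall C, C \in F -> phi C \in G) /\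
        (forall x : I, phi [set x] = [set x]),
        (forall C, inner F C -> inner G (phi C)),
        (forall C D, inner F C -> inner F D -> phi C = phi D -> C = D),
        (* (D1) increasing towards the root (strictly, as injective on edges) *)
        (forall C D, child F C D -> phi C \proper phi D) &
        (* (D4) injective on each tree: the two children of an inner vertex
           are sent into different branches below the image of the vertex *)
        (forall D C1 C2, child F C1 D -> child F C2 D -> C1 != C2 ->
           ~ exists K, [/\ K \in G, K \proper phi D &
                           (phi C1 :|: phi C2) \subset K])].

Definition forest0 : {set {set I}} := [set [set x] | x : I].

Definition in_interval (T F : {set {set I}}) : Prop :=
  is_forest F /\ forest_le forest0 F /\ forest_le F T.

Definition is_lattice_on (X : Type) (le : X -> X -> Prop) (P : X -> Prop) : Prop :=
  forall a b, P a -> P b ->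
    (exists j, [/\ P j, le a j, le b j &
                   forall u, P u -> le a u -> le b u -> le j u]) /\
    (exists m, [/\ P m, le m a, le m b &
                   forall l, P l -> le l a -> le l b -> le l m]).

End Forests.

(* Main.v *)
Require Import Defs.
From mathcomp Require Import all_boot.
From Stdlib Require Import Classical.
Set Implicit Arguments. Unset Strict Implicit. Unset Printing Implicit Defensive.


Definition lamspec {I : finType} (G : {set {set I}}) (C K : {set I}) : bool :=
  [&& K \in G, C \subset K & [forall K', ((K' \in G) && (C \subset K')) ==> (K \subset K')]].

Definition lam {I : finType} (G : {set {set I}}) (C : {set I}) : {set I} :=
  odflt C [pick K | lamspec G C K].

Lemma lamspecP I (G : {set {set I}}) (C K : {set I}) :
  reflect [/\ K \in G, C \subset K & forall K', K' \in G -> C \subset K' -> K \subset K'] (lamspec G C K).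
Proof.
apply: (iffP and3P) => [[a b /forallP c]|[a b c]]; split => //.
  by move=> K' h1 h2; have := c K'; rewrite h1 h2.
by apply/forallP => K'; apply/implyP => /andP[h1 h2]; exact: c.
Qed.

Lemma lamspec_uniq I (G : {set {set I}}) (C K1 K2 : {set I}) : lamspec G C K1 -> lamspec G C K2 -> K1 = K2.
Proof.
move=> /lamspecP[a b c] /lamspecP[a' b' c']; apply/eqP; rewrite eqEsubset.
by rewrite c // c'.
Qed.

Lemma lam_eq I (G : {set {set I}}) (C K : {set I}) : lamspec G C K -> lam G C = K.
Proof.
move=> h; rewrite /lam; case: pickP => [K' h'|/(_ K)]; last by rewrite h.
exact: lamspec_uniq h' h.
Qed.

Lemma lam_exists I (G : {set {set I}}) (C K0 : {set I}) : laminar G -> C != set0 -> K0 \in G ->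
  C \subset K0 -> lamspec G C (lam G C).
Proof.
move=> lamG /set0Pn[x xC] K0G CK0.
pose P := fun K => (K \in G) && (C \subset K).
case: (arg_minnP (fun K : {set I} => #|K|) (P := P) (i0 := K0)); first by rewrite /P K0G CK0.
move=> K /andP[KG CK] Kmin.
suff h : lamspec G C K by rewrite (lam_eq h).
apply/lamspecP; split => // K' K'G CK'.
have xK : x \in K by apply: (subsetP CK).
have xK' : x \in K' by apply: (subsetP CK').
case: (lamG K K' KG K'G) => [KK'|K'K|dis]; first done.
  have := Kmin K'; rewrite /P K'G CK' => /(_ isT) hc.
  have: K' == K by rewrite eqEcard K'K hc.
  by move/eqP->.
by rewrite (disjointFr dis xK) in xK'.
Qed.

Definition splits {I : finType} (F : {set {set I}}) (D A B : {set I}) :=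
  [/\ A \in F, B \in F, (A != set0) && (B != set0), [disjoint A & B] & A :|: B = D].

Lemma mem_nonempty I (F : {set {set I}}) C : set0 \notin F -> C \in F -> C != set0.
Proof. by move=> F0 CF; apply/eqP => e; rewrite -e CF in F0. Qed.

Lemma card_le1_single I (C : {set I}) : C != set0 -> (#|C| <= 1)%N -> exists x, C = [set x].
Proof. by move=> C0 h; apply/cards1P; rewrite eqn_leq h card_gt0. Qed.

Lemma splits_sym I (F : {set {set I}}) D A B : splits F D A B -> splits F D B A.
Proof.
move=> [a b /andP[c d] e f]; split=> //; first by rewrite d c.
  by rewrite disjoint_sym.
by rewrite setUC.
Qed.

Lemma splits_proper I (F : {set {set I}}) D A B : splits F D A B -> A \proper D.
Proof.
move=> [_ _ /andP[_ /set0Pn[y yB]] dis <-]; apply/properP; split; first exact: subsetUl.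
exists y; first by rewrite inE yB orbT.
by rewrite (disjointFl dis yB).
Qed.

Lemma split_child I (F : {set {set I}}) D A B : laminar F -> D \in F -> splits F D A B -> child F A D.
Proof.
move=> lamF DF sp; have AD := splits_proper sp.
case: sp => AF BF /andP[A0 B0] dis UD.
split=> // K KF AK KD.
have /set0Pn[y yB] := B0; have /set0Pn[x xA] := A0.
case: (lamF K B KF BF) => [KB|BK|disKB].
- have xK : x \in K := subsetP (proper_sub AK) x xA.
  by move: (disjointFr dis xA); rewrite (subsetP KB x xK).
- have: D \subset K by rewrite -UD subUset (proper_sub AK) BK.
  by move/(proper_sub_trans KD); rewrite properxx.
- have KA: K \subset A.
    apply/subsetP => z zK; have: z \in D := subsetP (proper_sub KD) z zK.
    rewrite -UD inE => /orP[//|zB]; by rewrite (disjointFr disKB zK) in zB.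
  by move: (proper_subn AK); rewrite KA.
Qed.

Lemma child_split1 I (F : {set {set I}}) C D A B x : laminar F -> child F C D -> splits F D A B ->
  x \in C -> x \in A -> C = A.
Proof.
move=> lamF ch sp xC xA; have [CF DF CD Cmax] := ch.
have [AF _ _ _ _] := sp.
have AD := splits_proper sp.
have [_ _ _ Amax] := split_child lamF DF sp.
case: (lamF C A CF AF) => [hCA|hAC|dis].
- case: (boolP (A \subset C)) => [hAC|nAC]; first by apply/eqP; rewrite eqEsubset hCA hAC.
  by case: (Cmax A AF _ AD); rewrite properE hCA nAC.
- case: (boolP (C \subset A)) => [hCA|nCA]; first by apply/eqP; rewrite eqEsubset hCA hAC.
  by case: (Amax C CF _ CD); rewrite properE hAC nCA.
- by rewrite (disjointFr dis xC) in xA.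
Qed.

Lemma child_split I (F : {set {set I}}) C D A B : is_forest F -> child F C D -> splits F D A B ->
  C = A \/ C = B.
Proof.
move=> [F0 _ lamF _] ch sp; have [CF _ CD _] := ch.
have /set0Pn[x xC] := mem_nonempty F0 CF.
have xD : x \in D := subsetP (proper_sub CD) x xC.
have [_ _ _ _ UD] := sp.
move: xD; rewrite -UD inE => /orP[xA|xB].
  by left; exact: child_split1 lamF ch sp xC xA.
by right; exact: child_split1 lamF ch (splits_sym sp) xC xB.
Qed.

Lemma forest_split I (F : {set {set I}}) D : is_forest F -> D \in F -> (1 < #|D|)%N ->
  exists A B, splits F D A B.
Proof.
move=> [_ _ _ bs] DF h; have [A [B [a b c d e]]] := bs D DF h.
by exists A, B; split.
Qed.

Lemma forest_single I (F : {set {set I}}) C : is_forest F -> C \in F -> (#|C| <= 1)%N ->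
  exists x, C = [set x].
Proof. by move=> [F0 _ _ _] CF h; apply: card_le1_single (mem_nonempty F0 CF) h. Qed.

Lemma le_extract I (F G : {set {set I}}) : is_forest F -> is_forest G -> forest_le F G ->
  [/\ (forall C, C \in F -> lamspec G C (lam G C)),
      (forall C D, inner F C -> inner F D -> lam G C = lam G D -> C = D) &
      (forall D A B, D \in F -> splits F D A B -> [disjoint lam G A & lam G B])].
Proof.
move=> fF fG [phi [[phiG phi1] phiI phiinj phich phiD4]].
have [F0 F1 lamF bsF] := fF; have [G0 G1 lamG bsG] := fG.
have sub: forall n (C : {set I}), (#|C| <= n)%N -> C \in F -> C \subset phi C.
  elim=> [|n IH] C hC CF.
    by move: (mem_nonempty F0 CF); rewrite -card_gt0; case: #|C| hC.
  case: (leqP #|C| 1) => h1.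
    by have [x ->] := forest_single fF CF h1; rewrite phi1.
  have [A [B sp]] := forest_split fF CF h1.
  have spB := splits_sym sp.
  have [AF BF _ _ UC] := sp.
  have hA := phich _ _ (split_child lamF CF sp).
  have hB := phich _ _ (split_child lamF CF spB).
  have cA : (#|A| <= n)%N by rewrite -ltnS (leq_trans (proper_card (splits_proper sp))).
  have cB : (#|B| <= n)%N by rewrite -ltnS (leq_trans (proper_card (splits_proper spB))).
  rewrite -{1}UC subUset; apply/andP; split.
    apply: (subset_trans (IH A cA AF)); exact: (proper_sub hA).
  apply: (subset_trans (IH B cB BF)); exact: (proper_sub hB).
have subC: forall C : {set I}, C \in F -> C \subset phi C by move=> C; apply: sub.
have disj: forall D A B : {set I}, D \in F -> splits F D A B -> [disjoint phi A & phi B].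
  move=> D A B DF sp; have spB := splits_sym sp.
  have [AF BF /andP[A0 B0] dAB _] := sp.
  have chA := split_child lamF DF sp; have chB := split_child lamF DF spB.
  have neq : A != B.
    have /set0Pn[x xA] := A0; apply/eqP => e.
    by move: (disjointFr dAB xA); rewrite -e xA.
  have D4 := phiD4 D A B chA chB neq.
  case: (lamG (phi A) (phi B) (phiG A AF) (phiG B BF)) => [h|h|//].
    case: D4; exists (phi B); split; [exact: phiG | exact: phich | by rewrite subUset h subxx].
  case: D4; exists (phi A); split; [exact: phiG | exact: phich | by rewrite subUset h subxx].
have spec: forall C : {set I}, C \in F -> lamspec G C (phi C).
  move=> C CF; apply/lamspecP; split; [exact: phiG | exact: subC |].
  move=> K KG CK.
  case: (leqP #|C| 1) => h1.
    by have [x e] := forest_single fF CF h1; rewrite e phi1 -e.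
  have [A [B sp]] := forest_split fF CF h1.
  have /set0Pn[x xC] := mem_nonempty F0 CF.
  have xK : x \in K := subsetP CK x xC.
  have xphi : x \in phi C := subsetP (subC C CF) x xC.
  case: (lamG K (phi C) KG (phiG C CF)) => [KpC|//|dis]; last first.
    by rewrite (disjointFr dis xK) in xphi.
  case: (boolP (phi C \subset K)) => // npCK.
  have Kp : K \proper phi C by rewrite properE KpC npCK.
  have side: forall A B : {set I}, splits F C A B -> phi A \subset K.
    move=> A' B' sp'; have [A'F B'F /andP[A0 B0] dAB UC] := sp'.
    have dp := disj C A' B' CF sp'.
    have /set0Pn[a aA] := A0; have /set0Pn[b bB] := B0.
    have aK : a \in K by apply: (subsetP CK); rewrite -UC inE aA.
    have bK : b \in K by apply: (subsetP CK); rewrite -UC inE bB orbT.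
    have aP : a \in phi A' := subsetP (subC A' A'F) a aA.
    have bP : b \in phi B' := subsetP (subC B' B'F) b bB.
    case: (lamG K (phi A') KG (phiG A' A'F)) => [KA|//|dKA].
      by move: (disjointFr dp (subsetP KA b bK)); rewrite bP.
    by rewrite (disjointFr dKA aK) in aP.
  have chA := split_child lamF CF sp; have chB := split_child lamF CF (splits_sym sp).
  have [_ _ /andP[A0 _] dAB _] := sp.
  have neq : A != B.
    have /set0Pn[y yA] := A0; apply/eqP => e.
    by move: (disjointFr dAB yA); rewrite -e yA.
  case: (phiD4 C A B chA chB neq); exists K; split => //.
  by rewrite subUset (side A B sp) (side B A (splits_sym sp)).
have lamphi: forall C : {set I}, C \in F -> lam G C = phi C by move=> C CF; apply: lam_eq; apply: spec.
split.
- by move=> C CF; rewrite lamphi //; apply: spec.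
- move=> C D iC iD; have CF : C \in F by case/andP: iC.
  have DF : D \in F by case/andP: iD.
  by rewrite !lamphi //; apply: phiinj.
- move=> D A B DF sp; have [AF BF _ _ _] := sp.
  by rewrite !lamphi //; apply: disj sp.
Qed.

Lemma le_by_lam I (F G : {set {set I}}) : is_forest F -> is_forest G ->
  (forall C, C \in F -> exists K, K \in G /\ C \subset K) ->
  (forall C D, inner F C -> inner F D -> lam G C = lam G D -> C = D) ->
  (forall C D, C \in F -> D \in F -> C \proper D -> lam G C != lam G D) ->
  forest_le F G.
Proof.
move=> fF fG ex inj strict.
have [F0 F1 lamF bsF] := fF; have [G0 G1 lamG bsG] := fG.
have spec: forall C : {set I}, C \in F -> lamspec G C (lam G C).
  move=> C CF; have [K [KG CK]] := ex C CF.
  exact: lam_exists lamG (mem_nonempty F0 CF) KG CK.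
exists (lam G); split.
- split; first by move=> C CF; case/lamspecP: (spec C CF).
  move=> x; apply: lam_eq; apply/lamspecP; split => //.
- move=> C /andP[CF h]; case/lamspecP: (spec C CF) => a b _.
  by rewrite /inner a (leq_trans h (subset_leq_card b)).
- exact: inj.
- move=> C D [CF DF CD _]; rewrite properEneq strict //.
  case/lamspecP: (spec D DF) => a b _; case/lamspecP: (spec C CF) => _ _ c.
  by apply: c => //; exact: subset_trans (proper_sub CD) b.
- move=> D C1 C2 ch1 ch2 neq [K [KG KD sub]].
  have [C1F DF C1D _] := ch1.
  have /set0Pn[x xC1] := mem_nonempty F0 C1F.
  have h1 : (1 < #|D|)%N.
    apply: (@leq_trans #|C1|.+1); [rewrite ltnS card_gt0; apply/set0Pn; by exists x | exact: proper_card].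
  have [A [B sp]] := forest_split fF DF h1.
  have UD : C1 :|: C2 = D.
    have [_ _ _ _ UAB] := sp.
    case: (child_split fF ch1 sp) => e1; case: (child_split fF ch2 sp) => e2;
      rewrite e1 e2 in neq *; rewrite ?eqxx // in neq; by rewrite ?(setUC B A).
  have DK : D \subset K.
    rewrite -UD; apply: subset_trans sub; apply: setUSS.
      by case/lamspecP: (spec C1 C1F).
    by have [C2F _ _ _] := ch2; case/lamspecP: (spec C2 C2F).
  case/lamspecP: (spec D DF) => _ _ c.
  by move: (proper_subn KD); rewrite c.
Qed.


Lemma lamT_spec I (T : {set {set I}}) (C : {set I}) : is_tree T -> C != set0 -> lamspec T C (lam T C).
Proof. by move=> [[_ _ lamT _] TT] C0; apply: lam_exists lamT C0 TT (subsetT C). Qed.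

Lemma lamT_in I (T : {set {set I}}) (C : {set I}) : is_tree T -> C != set0 -> lam T C \in T.
Proof. by move=> hT C0; case/lamspecP: (lamT_spec hT C0). Qed.

Lemma lamT_sub I (T : {set {set I}}) (C : {set I}) : is_tree T -> C != set0 -> C \subset lam T C.
Proof. by move=> hT C0; case/lamspecP: (lamT_spec hT C0). Qed.

Lemma lamT_min I (T : {set {set I}}) (C K : {set I}) : is_tree T -> C != set0 -> K \in T -> C \subset K ->
  lam T C \subset K.
Proof. by move=> hT C0 KT CK; case/lamspecP: (lamT_spec hT C0) => _ _; apply. Qed.

Lemma lamT_id I (T : {set {set I}}) (C : {set I}) : C \in T -> lam T C = C.
Proof. by move=> CT; apply: lam_eq; apply/lamspecP; split. Qed.

Lemma nonempty_sub I (C D : {set I}) : C != set0 -> C \subset D -> D != set0.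
Proof.
move=> /set0Pn[x xC] CD; apply/set0Pn; exists x; exact: subsetP CD x xC.
Qed.

Lemma lamT_mono I (T : {set {set I}}) (C D : {set I}) : is_tree T -> C != set0 -> C \subset D ->
  lam T C \subset lam T D.
Proof.
move=> hT C0 CD; have D0 := nonempty_sub C0 CD.
apply: lamT_min => //; first exact: lamT_in.
exact: subset_trans CD (lamT_sub hT D0).
Qed.

Lemma lamT_between I (T : {set {set I}}) (C X K : {set I}) : is_tree T -> C != set0 -> C \subset X ->
  X \subset K -> lam T K = lam T C -> lam T X = lam T C.
Proof.
move=> hT C0 CX XK e; have X0 := nonempty_sub C0 CX.
apply/eqP; rewrite eqEsubset (lamT_mono hT C0 CX) andbT -e.
exact: lamT_mono.
Qed.

Definition injT {I : finType} (T F : {set {set I}}) :=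
  forall C D : {set I}, inner F C -> inner F D -> lam T C = lam T D -> C = D.

Lemma strict_of_inj I (T F : {set {set I}}) : is_tree T -> is_forest F -> injT T F ->
  forall C D : {set I}, C \in F -> D \in F -> C \proper D -> lam T C != lam T D.
Proof.
move=> hT fF inj C D CF DF CD; apply/eqP => e.
have [F0 F1 _ _] := fF.
case: (leqP #|C| 1) => h1.
  have [x ex] := forest_single fF CF h1.
  have xT : [set x] \in T by case: hT => [[_ T1 _ _] _].
  have: D \subset C.
    rewrite ex -(lamT_id xT) -ex e; apply: lamT_sub => //.
    exact: mem_nonempty F0 DF.
  by move: (proper_subn CD) => /negP.
have h2 : (1 < #|D|)%N by apply: leq_trans h1 (ltnW (proper_card CD)).
have := inj C D; rewrite /inner CF DF h1 h2 => /(_ isT isT e) eCD.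
by move: CD; rewrite eCD properxx.
Qed.

Definition inP {I : finType} (T F : {set {set I}}) := in_interval T F.

Lemma inP_inj I (T F : {set {set I}}) : is_tree T -> inP T F -> injT T F.
Proof.
move=> [fT _] [fF [_ le]]; by have [_ inj _] := le_extract fF fT le.
Qed.

Lemma inP_disj I (T F : {set {set I}}) (K A B : {set I}) : is_tree T -> inP T F -> K \in F -> splits F K A B ->
  [disjoint lam T A & lam T B].
Proof.
move=> [fT _] [fF [_ le]]; have [_ _ d] := le_extract fF fT le; exact: d.
Qed.

Lemma inP_side I (T F : {set {set I}}) (K A B Y : {set I}) : is_tree T -> inP T F -> K \in F -> splits F K A B ->
  Y != set0 -> lam T Y \proper lam T K -> (Y :&: K \subset A) \/ (Y :&: K \subset B).
Proof.
move=> hT hF KF sp Y0 YK.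
have dis := inP_disj hT hF KF sp.
have [AF BF /andP[A0 B0] dAB UK] := sp.
have [[F0 _ _ _] _] := hF.
have [[_ _ lamT _] _] := hT.
case: (boolP (Y :&: A == set0)) => [/eqP YA|/set0Pn[y1]].
  right; apply/subsetP => z; rewrite inE => /andP[zY zK].
  move: zK; rewrite -UK inE => /orP[zA|//].
  have: z \in Y :&: A by rewrite inE zY zA.
  by rewrite YA inE.
rewrite inE => /andP[y1Y y1A].
case: (boolP (Y :&: B == set0)) => [/eqP YB|/set0Pn[y2]].
  left; apply/subsetP => z; rewrite inE => /andP[zY zK].
  move: zK; rewrite -UK inE => /orP[//|zB].
  have: z \in Y :&: B by rewrite inE zY zB.
  by rewrite YB inE.
rewrite inE => /andP[y2Y y2B].
exfalso.
have sub: forall (A' B' : {set I}) (y1 y2 : I), A' \in F -> [disjoint lam T A' & lam T B'] ->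
    y1 \in Y -> y1 \in A' -> y2 \in Y -> y2 \in B' -> B' != set0 -> lam T A' \subset lam T Y.
  move=> A' B' z1 z2 A'F d z1Y z1A z2Y z2B B'0.
  have A'0 : A' != set0 by apply/set0Pn; exists z1.
  have zl : z1 \in lam T A' := subsetP (lamT_sub hT A'0) z1 z1A.
  have zY : z1 \in lam T Y := subsetP (lamT_sub hT Y0) z1 z1Y.
  case: (lamT _ _ (lamT_in hT A'0) (lamT_in hT Y0)) => [//|YA'|dd].
    have z2l : z2 \in lam T B' := subsetP (lamT_sub hT B'0) z2 z2B.
    by move: (disjointFr d (subsetP YA' z2 (subsetP (lamT_sub hT Y0) z2 z2Y))); rewrite z2l.
  by rewrite (disjointFr dd zl) in zY.
have s1 := sub A B y1 y2 AF dis y1Y y1A y2Y y2B B0.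
have dis' : [disjoint lam T B & lam T A] by rewrite disjoint_sym.
have s2 := sub B A y2 y1 BF dis' y2Y y2B y1Y y1A A0.
have KY : K \subset lam T Y.
  rewrite -UK subUset; apply/andP; split.
    exact: subset_trans (lamT_sub hT A0) s1.
  exact: subset_trans (lamT_sub hT B0) s2.
have K0 : K != set0 by apply: mem_nonempty F0 KF.
have := lamT_min hT K0 (lamT_in hT Y0) KY.
by move: (proper_subn YK) => /negP.
Qed.

Definition rel {I : finType} (T F G : {set {set I}}) :=
  forall C, C \in F -> exists K, [/\ K \in G, C \subset K & lam T K = lam T C].

Lemma rel_lamG I (T F G : {set {set I}}) (C : {set I}) : is_tree T -> is_forest F -> is_forest G ->
  rel T F G -> C \in F -> lamspec G C (lam G C) /\ lam T (lam G C) = lam T C.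
Proof.
move=> hT [F0 _ _ _] [_ _ lamG _] r CF; have [K [KG CK e]] := r C CF.
have C0 := mem_nonempty F0 CF.
have sp := lam_exists lamG C0 KG CK; split => //.
case/lamspecP: sp => a b c; exact: lamT_between hT C0 b (c K KG CK) e.
Qed.

Lemma le_of_rel I (T F G : {set {set I}}) : is_tree T -> is_forest F -> is_forest G -> injT T F ->
  rel T F G -> forest_le F G.
Proof.
move=> hT fF fG inj r; apply: le_by_lam => //.
- by move=> C CF; have [K [KG CK _]] := r C CF; exists K.
- move=> C D iC iD e; apply: inj => //.
  have CF : C \in F by case/andP: iC.
  have DF : D \in F by case/andP: iD.
  by rewrite -(rel_lamG hT fF fG r CF).2 -(rel_lamG hT fF fG r DF).2 e.
- move=> C D CF DF CD; apply/eqP => e.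
  have := strict_of_inj hT fF inj CF DF CD.
  by rewrite -(rel_lamG hT fF fG r CF).2 -(rel_lamG hT fF fG r DF).2 e eqxx.
Qed.

Lemma rel_of_le I (T F G : {set {set I}}) : is_tree T -> inP T F -> inP T G -> forest_le F G ->
  rel T F G.
Proof.
move=> hT hF hG le; have [fF _] := hF; have [fG _] := hG.
have [spec _ _] := le_extract fF fG le.
move=> C CF; exists (lam G C).
case/lamspecP: (spec C CF) => KG CK Kmin; split => //.
have [F0 _ _ _] := fF.
have C0 := mem_nonempty F0 CF.
apply/eqP; rewrite eqEsubset (lamT_mono hT C0 CK) andbT.
case: (boolP (lam T (lam G C) \subset lam T C)) => // nKC; exfalso.
have CKp : lam T C \proper lam T (lam G C) by rewrite properE (lamT_mono hT C0 CK) nKC.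
case: (leqP #|lam G C| 1) => h1.
  have [x ex] := forest_single fG KG h1.
  have KC : lam G C \subset C.
    have /set0Pn[y yC] := C0.
    have := subsetP CK y yC; rewrite ex inE => /eqP eyx.
    by rewrite sub1set -eyx.
  by move: nKC; rewrite (lamT_mono hT (nonempty_sub C0 CK) KC).
have [A [B sp]] := forest_split fG KG h1.
have [AF BF _ _ _] := sp.
have CKe : C :&: lam G C = C by apply/setIidPl.
case: (inP_side hT hG KG sp C0 CKp); rewrite CKe => h.
  by move: (proper_subn (splits_proper sp)); rewrite (Kmin A AF h).
by move: (proper_subn (splits_proper (splits_sym sp))); rewrite (Kmin B BF h).
Qed.

Lemma rel_trans I (T F G H : {set {set I}}) : rel T F G -> rel T G H -> rel T F H.
Proof.
move=> r1 r2 C CF; have [K [KG CK e]] := r1 C CF.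
have [K' [K'H KK' e']] := r2 K KG.
by exists K'; split; [done | exact: subset_trans CK KK' | rewrite e' e].
Qed.

Lemma forest0_le I (F : {set {set I}}) : is_forest F -> forest_le (forest0 I) F.
Proof.
move=> [F0 F1 _ _].
have sing: forall C, C \in forest0 I -> exists x, C = [set x].
  by move=> C /imsetP[x _ ->]; exists x.
have nch: forall C D, C \in forest0 I -> D \in forest0 I -> ~ C \proper D.
  move=> C D /sing[x ->] /sing[y ->] /proper_card; by rewrite !cards1.
exists id; split.
- by split => // C /sing[x ->].
- by move=> C /andP[/sing[x ->]]; rewrite cards1.
- by move=> C D /andP[/sing[x ->]]; rewrite cards1.
- by move=> C D [CF DF CD _]; case: (nch C D CF DF CD).
- by move=> D C1 C2 [CF DF CD _]; case: (nch C1 D CF DF CD).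
Qed.

Lemma injT_self I (T : {set {set I}}) : injT T T.
Proof. by move=> C D /andP[CT _] /andP[DT _]; rewrite !lamT_id. Qed.

Lemma inP_top I (T : {set {set I}}) : is_tree T -> inP T T.
Proof.
move=> hT; have [fT _] := hT; split => //; split; first exact: forest0_le.
apply: (le_of_rel hT fT fT (@injT_self _ T)) => C CT; by exists C; split.
Qed.

Definition meetF {I : finType} (T F G : {set {set I}}) : {set {set I}} :=
  [set X : {set I} | (X != set0) && [exists E, [exists E', [&& E \in F, E' \in G,
     X == E :&: E', lam T X == lam T E & lam T X == lam T E']]]].

Lemma meet_intro I (T F G : {set {set I}}) (X E E' : {set I}) : X != set0 -> E \in F -> E' \in G ->
  X = E :&: E' -> lam T X = lam T E -> lam T X = lam T E' -> X \in meetF T F G.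
Proof.
move=> X0 EF E'G e1 e2 e3; rewrite inE X0 /=; apply/existsP; exists E; apply/existsP; exists E'.
by rewrite EF E'G e1 eqxx /= -e1 e2 eqxx /= -e2 e3 eqxx.
Qed.

Lemma meet_elim I (T F G : {set {set I}}) (X : {set I}) : X \in meetF T F G ->
  X != set0 /\ exists E E', [/\ E \in F, E' \in G, X = E :&: E', lam T X = lam T E & lam T X = lam T E'].
Proof.
rewrite inE => /andP[X0 /existsP[E /existsP[E' /and5P[a b /eqP c /eqP d /eqP e]]]].
by split => //; exists E, E'; split.
Qed.

Lemma step I (T F : {set {set I}}) (C Y : {set I}) : is_tree T -> inP T F -> C \in F ->
  Y != set0 -> Y \subset C -> lam T Y != lam T C ->
  exists A, [/\ A \in F, A \proper C & Y \subset A].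
Proof.
move=> hT hF CF Y0 YC ne; have [fF _] := hF.
case: (leqP #|C| 1) => h1.
  have [x ex] := forest_single fF CF h1.
  have YCe : Y = C.
    apply/eqP; rewrite eqEsubset YC /= ex sub1set.
    have /set0Pn[y yY] := Y0; have := subsetP YC y yY; rewrite ex inE => /eqP <-; done.
  by rewrite YCe eqxx in ne.
have [A [B sp]] := forest_split fF CF h1.
have [AF BF _ _ _] := sp.
have Yp : lam T Y \proper lam T C by rewrite properEneq ne lamT_mono.
have YCe : Y :&: C = Y by apply/setIidPl.
case: (inP_side hT hF CF sp Y0 Yp); rewrite YCe => h.
  by exists A; split => //; exact: splits_proper sp.
by exists B; split => //; exact: splits_proper (splits_sym sp).
Qed.

Lemma descend I (T F G : {set {set I}}) : is_tree T -> inP T F -> inP T G ->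
  forall n (C C' : {set I}), (#|C| + #|C'| <= n)%N -> C \in F -> C' \in G -> C :&: C' != set0 ->
  C :&: C' \in meetF T F G.
Proof.
move=> hT hF hG; elim=> [|n IH] C C' hn CF C'G X0.
  have [[F0 _ _ _] _] := hF.
  by move: (mem_nonempty F0 CF); rewrite -card_gt0; move: hn; case: #|C|.
case: (boolP (lam T (C :&: C') == lam T C)) => e1.
  case: (boolP (lam T (C :&: C') == lam T C')) => e2.
    by apply: meet_intro X0 CF C'G _ (eqP e1) (eqP e2).
  have [A [A'G AC XA]] := step hT hG C'G X0 (subsetIr C C') e2.
  have eA : C :&: C' = C :&: A.
    apply/eqP; rewrite eqEsubset (setIS C (proper_sub AC)) andbT.
    by rewrite subsetI subsetIl XA.
  rewrite eA; apply: IH => //; last by rewrite -eA.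
  rewrite -ltnS; apply: leq_trans hn; rewrite -addnS leq_add2l; exact: proper_card.
have [A [AF AC XA]] := step hT hF CF X0 (subsetIl C C') e1.
have eA : C :&: C' = A :&: C'.
  apply/eqP; rewrite eqEsubset (setSI C' (proper_sub AC)) andbT.
  by rewrite subsetI subsetIr XA.
rewrite eA; apply: IH => //; last by rewrite -eA.
rewrite -ltnS; apply: leq_trans hn; rewrite -addSn leq_add2r; exact: proper_card.
Qed.

Lemma Q5 I (T F : {set {set I}}) (E1 E2 : {set I}) x : is_tree T -> inP T F -> E1 \in F -> E2 \in F ->
  x \in E1 -> x \in E2 -> lam T E1 \subset lam T E2 -> E1 \subset E2.
Proof.
move=> hT hF E1F E2F x1 x2 l12; have [fF _] := hF; have [F0 _ lamF _] := fF.
have E10 : E1 != set0 by apply/set0Pn; exists x.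
have E20 : E2 != set0 by apply/set0Pn; exists x.
case: (lamF E1 E2 E1F E2F) => [//|h21|dis]; last by rewrite (disjointFr dis x1) in x2.
case: (boolP (E1 \subset E2)) => // n12.
have p : E2 \proper E1 by rewrite properE h21 n12.
have := strict_of_inj hT fF (inP_inj hT hF) E2F E1F p.
by rewrite eqEsubset l12 (lamT_mono hT E20 h21).
Qed.

Lemma meet_forest I (T F G : {set {set I}}) : is_tree T -> inP T F -> inP T G ->
  is_forest (meetF T F G).
Proof.
move=> hT hF hG; have [[_ _ lamT _] _] := hT.
split.
- by apply/negP => /meet_elim[/eqP].
- move=> x; apply: (@meet_intro _ _ _ _ _ [set x] [set x]) => //.
  + by apply/set0Pn; exists x; rewrite inE.
  + by case: hF => [[_ h _ _] _].
  + by case: hG => [[_ h _ _] _].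
  + by rewrite setIid.
- have dir: forall X1 X2 x, X1 \in meetF T F G -> X2 \in meetF T F G -> x \in X1 -> x \in X2 ->
      lam T X1 \subset lam T X2 -> X1 \subset X2.
    move=> X1 X2 x /meet_elim[X10 [E1 [E1' [E1F E1'G e1 l1 l1']]]]
                   /meet_elim[X20 [E2 [E2' [E2F E2'G e2 l2 l2']]]] x1 x2 l12.
    move: (x1) (x2); rewrite e1 e2 !inE => /andP[xa xb] /andP[xc xd].
    apply: setISS.
      by apply: (Q5 hT hF E1F E2F xa xc); rewrite -l1 -l2.
    by apply: (Q5 hT hG E1'G E2'G xb xd); rewrite -l1' -l2'.
  move=> X1 X2 h1 h2.
  case: (boolP [disjoint X1 & X2]) => [d|]; first by constructor 3.
  rewrite -setI_eq0 => /set0Pn[x]; rewrite inE => /andP[x1 x2].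
  have [X10 _] := meet_elim h1; have [X20 _] := meet_elim h2.
  have y1 : x \in lam T X1 := subsetP (lamT_sub hT X10) x x1.
  have y2 : x \in lam T X2 := subsetP (lamT_sub hT X20) x x2.
  case: (lamT _ _ (lamT_in hT X10) (lamT_in hT X20)) => [l|l|d].
  + by constructor 1; apply: dir h1 h2 x1 x2 l.
  + by constructor 2; apply: dir h2 h1 x2 x1 l.
  + by rewrite (disjointFr d y1) in y2.
- move=> X hX h1.
  have [X0 [E [E' [EF E'G eX l l']]]] := meet_elim hX.
  have [fF _] := hF.
  have XE : X \subset E by rewrite eX subsetIl.
  have hE : (1 < #|E|)%N := leq_trans h1 (subset_leq_card XE).
  have [A [B sp]] := forest_split fF EF hE.
  have part: forall A B : {set I}, splits F E A B -> X :&: A != set0 /\ X :&: A \in meetF T F G.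
    move=> A' B' sp'; have [A'F B'F _ dAB UE] := sp'.
    have eXA : X :&: A' = A' :&: E'.
      rewrite eX setIC setIA; congr (_ :&: _); apply/setIidPl.
      by rewrite -UE subsetUl.
    have ne : X :&: A' != set0.
      apply/negP => /eqP XA0.
      have XB : X \subset B'.
        apply/subsetP => z zX; have := subsetP XE z zX; rewrite -UE inE => /orP[zA|//].
        have: z \in X :&: A' by rewrite inE zX zA.
        by rewrite XA0 inE.
      have [[F0 _ _ _] _] := hF.
      have pB : B' \proper E by apply: splits_proper (splits_sym sp').
      have := strict_of_inj hT fF (inP_inj hT hF) B'F EF pB.
      rewrite eqEsubset (lamT_mono hT (mem_nonempty F0 B'F) (proper_sub pB)) /= -l.
      by rewrite (lamT_mono hT X0 XB).
    split => //; rewrite eXA; apply: (descend hT hF hG (leqnn _)) => //.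
    by rewrite -eXA.
  have [a1 a2] := part A B sp; have [b1 b2] := part B A (splits_sym sp).
  exists (X :&: A), (X :&: B); split => //; first by rewrite a1 b1.
    have [_ _ _ dAB _] := sp.
    by apply: disjointW dAB; apply: subsetIr.
  have [_ _ _ _ UE] := sp.
  by rewrite -setIUr UE; apply/setIidPl.
Qed.

Lemma meet_inj I (T F G : {set {set I}}) : is_tree T -> inP T F -> inP T G -> injT T (meetF T F G).
Proof.
move=> hT hF hG X1 X2 /andP[h1 c1] /andP[h2 c2] e.
have [_ [E1 [E1' [E1F E1'G e1 l1 l1']]]] := meet_elim h1.
have [_ [E2 [E2' [E2F E2'G e2 l2 l2']]]] := meet_elim h2.
have iE : forall (E X : {set I}) (K : {set {set I}}), E \in K -> X \subset E -> (1 < #|X|)%N -> inner K E.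
  by move=> E X K EK XE h; rewrite /inner EK (leq_trans h (subset_leq_card XE)).
have ee : E1 = E2.
  apply: (inP_inj hT hF); [apply: (iE _ X1) | apply: (iE _ X2) | ] => //.
  - by rewrite e1 subsetIl.
  - by rewrite e2 subsetIl.
  - by rewrite -l1 -l2 e.
have ee' : E1' = E2'.
  apply: (inP_inj hT hG); [apply: (iE _ X1) | apply: (iE _ X2) | ] => //.
  - by rewrite e1 subsetIr.
  - by rewrite e2 subsetIr.
  - by rewrite -l1' -l2' e.
by rewrite e1 e2 ee ee'.
Qed.

Lemma meet_inP I (T F G : {set {set I}}) : is_tree T -> inP T F -> inP T G -> inP T (meetF T F G).
Proof.
move=> hT hF hG; have fM := meet_forest hT hF hG; have [fT _] := hT.
split => //; split; first exact: forest0_le.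
apply: (le_of_rel hT fM fT (meet_inj hT hF hG)) => X hX.
have [X0 _] := meet_elim hX.
exists (lam T X); split; [exact: lamT_in | exact: lamT_sub | by rewrite lamT_id // lamT_in].
Qed.

Lemma meet_leF I (T F G : {set {set I}}) : is_tree T -> inP T F -> inP T G ->
  forest_le (meetF T F G) F /\ forest_le (meetF T F G) G.
Proof.
move=> hT hF hG; have fM := meet_forest hT hF hG.
have [fF _] := hF; have [fG _] := hG.
split.
  apply: (le_of_rel hT fM fF (meet_inj hT hF hG)) => X hX.
  have [X0 [E [E' [EF E'G eX l l']]]] := meet_elim hX.
  by exists E; split => //; rewrite eX subsetIl.
apply: (le_of_rel hT fM fG (meet_inj hT hF hG)) => X hX.
have [X0 [E [E' [EF E'G eX l l']]]] := meet_elim hX.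
by exists E'; split => //; rewrite eX subsetIr.
Qed.

Lemma meet_max I (T F G H : {set {set I}}) : is_tree T -> inP T F -> inP T G -> inP T H ->
  forest_le H F -> forest_le H G -> forest_le H (meetF T F G).
Proof.
move=> hT hF hG hH l1 l2.
have r1 := rel_of_le hT hH hF l1; have r2 := rel_of_le hT hH hG l2.
have fM := meet_forest hT hF hG; have [fH _] := hH.
apply: (le_of_rel hT fH fM (inP_inj hT hH)) => C CH.
have [K1 [K1F CK1 e1]] := r1 C CH; have [K2 [K2G CK2 e2]] := r2 C CH.
have [[F0 _ _ _] _] := hH.
have C0 := mem_nonempty F0 CH.
have CX : C \subset K1 :&: K2 by rewrite subsetI CK1 CK2.
have eX : lam T (K1 :&: K2) = lam T C := lamT_between hT C0 CX (subsetIl _ _) e1.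
exists (K1 :&: K2); split => //.
apply: (meet_intro (E := K1) (E' := K2)) => //.
- exact: nonempty_sub C0 CX.
- by rewrite eX e1.
- by rewrite eX e2.
Qed.

Lemma lattice_of_meets (X : finType) (le : X -> X -> Prop) (P : X -> Prop) (top : X) :
  P top -> (forall a, P a -> le a top) ->
  (forall a b c, P a -> P b -> P c -> le a b -> le b c -> le a c) ->
  (forall a b, P a -> P b -> exists m, [/\ P m, le m a, le m b &
                                        forall l, P l -> le l a -> le l b -> le l m]) ->
  is_lattice_on le P.
Proof.
move=> Ptop letop tr meet.
have fold: forall s : seq X, (forall u, u \in s -> P u) ->
    exists m, [/\ P m, (forall u, u \in s -> le m u) &
                forall l, P l -> (forall u, u \in s -> le l u) -> le l m].
  elim=> [|u s IH] hs.
    by exists top; split => // l Pl _; apply: letop.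
  have [|m' [Pm' m's m'max]] := IH.
    by move=> v vs; apply: hs; rewrite inE vs orbT.
  have Pu : P u by apply: hs; rewrite inE eqxx.
  have [m [Pm mu mm' mmax]] := meet u m' Pu Pm'.
  exists m; split => //.
    move=> v; rewrite inE => /orP[/eqP->//|vs].
    apply: (tr m m' v) => //; first by apply: hs; rewrite inE vs orbT.
    exact: m's.
  move=> l Pl hl; apply: mmax => //; first by apply: hl; rewrite inE eqxx.
  by apply: m'max => // v vs; apply: hl; rewrite inE vs orbT.
have filt: forall (Q : X -> Prop) (s : seq X), exists s' : seq X,
    forall u, u \in s' <-> (u \in s /\ Q u).
  move=> Q; elim=> [|u s [s' IH]].
    by exists [::] => u; split => // [[]].
  case: (classic (Q u)) => Qu.
    exists (u :: s') => v; rewrite !inE; split.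
      by case/orP => [/eqP->|/IH[a b]]; [rewrite eqxx | rewrite a orbT].
    case=> /orP[/eqP->|vs] Qv; first by rewrite eqxx.
    by apply/orP; right; apply/IH.
  exists s' => v; rewrite inE; split.
    by move/IH => [a b]; rewrite a orbT.
  case=> /orP[/eqP->|vs] Qv; first by [].
  by apply/IH.
move=> a b Pa Pb; split; last exact: meet.
have [s' hs'] := filt (fun u => [/\ P u, le a u & le b u]) (enum X).
have [|m [Pm ms mmax]] := fold s'.
  by move=> u /hs'[_ [Pu _ _]].
exists m; split => //.
- by apply: mmax => // u /hs'[_ [_ h _]].
- by apply: mmax => // u /hs'[_ [_ _ h]].
- by move=> u Pu au bu; apply: ms; apply/hs'; split; [rewrite mem_enum | split].
Qed.

Theorem theorem3p5 (I : finType) (T : {set {set I}}) :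
  is_tree T -> is_lattice_on (@forest_le I) (in_interval T).
Proof.
move=> hT; apply: (lattice_of_meets (top := T)).
- exact: inP_top.
- by move=> a [_ [_ h]].
- move=> a b c Pa Pb Pc ab bc.
  have [fa _] := Pa; have [fc _] := Pc.
  apply: (le_of_rel hT fa fc (inP_inj hT Pa)).
  exact: rel_trans (rel_of_le hT Pa Pb ab) (rel_of_le hT Pb Pc bc).
- move=> a b Pa Pb; exists (meetF T a b).
  have [l1 l2] := meet_leF hT Pa Pb.
  split => //; first exact: meet_inP.
  by move=> l Pl la lb; apply: meet_max.
Qed.
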